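(* Let $K$ be a compact Hausdorff space and $B$ the open unit ball of $C(K)$. The following are equivalent: (i) for every $\psi\in H^\infty(B)$, $\hat\psi(\mathcal M_0(B))\subset \mathsf{Cl}_B(\psi,0)$; (ii) for every $f_0\in B$ and every $\psi\in H^\infty(B)$, $\hat\psi(\mathcal M_{f_0}(B))\subset \mathsf{Cl}_B(\psi,f_0)$.
   Context: $H^\infty(B)$ is the uniform algebra of all bounded holomorphic functions on $B$, and $A_u(B)$ its subalgebra of functions uniformly continuous on $B$. For $g_0\in B$, $\mathcal M_{g_0}(B)$ is the set of nonzero multiplicative linear functionals $\tau$ on $H^\infty(B)$ with $\tau(g)=g(g_0)$ for all $g\in A_u(B)$; $\hat\psi(\tau)=\tau(\psi)$. A net $(f_\alpha)$ in $B$ converges to $g_0\in B$ in the polynomial-star topology if $P(f_\alpha)\to P(g_0)$ for every continuous polynomial $P$ on $C(K)$. $\mathsf{Cl}_B(\psi,g_0)$ is the set of all $\lambda\in\mathbb C$ with $\lambda=\lim_\alpha\psi(f_\alpha)$ for some net $(f_\alpha)\subset B$ converging to $g_0$ in the polynomial-star topology. *)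

(* Defs.v *)
From Stdlib Require Import Reals List.
Open Scope R_scope.

Definition C : Type := (R * R)%type.
Definition C0 : C := (0, 0).
Definition C1 : C := (1, 0).
Definition Cadd (z w : C) : C := (fst z + fst w, snd z + snd w).
Definition Copp (z : C) : C := (- fst z, - snd z).
Definition Csub (z w : C) : C := Cadd z (Copp w).
Definition Cmul (z w : C) : C :=
  (fst z * fst w - snd z * snd w, fst z * snd w + snd z * fst w).
Definition Cmod (z : C) : R := sqrt (fst z ^ 2 + snd z ^ 2).
Fixpoint Csum (N : nat) (f : nat -> C) : C :=
  match N with O => C0 | S N' => Cadd (Csum N' f) (f N') end.

Record topology (K : Type) := {
  opn : (K -> Prop) -> Prop;
  opn_full : opn (fun _ => True);
  opn_inter : forall U V, opn U -> opn V -> opn (fun x => U x /\ V x);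
  opn_union : forall (I : Type) (F : I -> K -> Prop),
      (forall i, opn (F i)) -> opn (fun x => exists i, F i x)
}.
Arguments opn {K} t _.

Definition top_compact {K : Type} (T : topology K) : Prop :=
  forall (I : Type) (U : I -> K -> Prop),
    (forall i, opn T (U i)) -> (forall k, exists i, U i k) ->
    exists l : list I, forall k, exists i, In i l /\ U i k.

Definition top_hausdorff {K : Type} (T : topology K) : Prop :=
  forall x y : K, x <> y -> exists U V, opn T U /\ opn T V /\ U x /\ V y /\
    (forall z, ~ (U z /\ V z)).

(* Elements of C(K) are functions K -> C satisfying [cont]. *)
Definition cont {K : Type} (T : topology K) (f : K -> C) : Prop :=
  forall k eps, 0 < eps -> exists U, opn T U /\ U k /\
    forall k', U k' -> Cmod (Csub (f k') (f k)) < eps.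

Definition fadd {K : Type} (f g : K -> C) : K -> C := fun k => Cadd (f k) (g k).
Definition fsub {K : Type} (f g : K -> C) : K -> C := fun k => Csub (f k) (g k).
Definition fscal {K : Type} (c : C) (f : K -> C) : K -> C := fun k => Cmul c (f k).
Definition fzero {K : Type} : K -> C := fun _ => C0.

Definition normle {K : Type} (h : K -> C) (r : R) : Prop :=
  forall k, Cmod (h k) <= r.

(* Open unit ball B of C(K) (the sup is attained on a compact space). *)
Definition inB {K : Type} (T : topology K) (f : K -> C) : Prop :=
  cont T f /\ exists r, r < 1 /\ normle f r.

(* Frechet complex differentiability at x, relative to points of B. *)
Definition cbounded_linear {K : Type} (T : topology K) (L : (K -> C) -> C) : Prop :=
  (forall h1 h2, cont T h1 -> cont T h2 -> L (fadd h1 h2) = Cadd (L h1) (L h2)) /\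
  (forall c h, cont T h -> L (fscal c h) = Cmul c (L h)) /\
  (exists M, forall h r, cont T h -> normle h r -> Cmod (L h) <= M * r).

Definition holo_at {K : Type} (T : topology K) (psi : (K -> C) -> C) (x : K -> C) : Prop :=
  exists L, cbounded_linear T L /\
    forall eps, 0 < eps -> exists delta, 0 < delta /\
      forall h r, cont T h -> 0 <= r -> r <= delta -> normle h r ->
        inB T (fadd x h) ->
        Cmod (Csub (Csub (psi (fadd x h)) (psi x)) (L h)) <= eps * r.

(* psi represents an element of H^infty(B) (only its values on B matter). *)
Definition Hinf {K : Type} (T : topology K) (psi : (K -> C) -> C) : Prop :=
  (forall x, inB T x -> holo_at T psi x) /\
  (exists M, forall x, inB T x -> Cmod (psi x) <= M).

Definition Au {K : Type} (T : topology K) (g : (K -> C) -> C) : Prop :=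
  Hinf T g /\
  forall eps, 0 < eps -> exists delta, 0 < delta /\
    forall f1 f2, inB T f1 -> inB T f2 -> normle (fsub f1 f2) delta ->
      Cmod (Csub (g f1) (g f2)) <= eps.

(* tau is a nonzero multiplicative linear functional on H^infty(B)
   (functions agreeing on B are the same element of H^infty(B)),
   and tau(g) = g(g0) for every g in A_u(B). *)
Definition Mfib {K : Type} (T : topology K) (g0 : K -> C)
    (tau : ((K -> C) -> C) -> C) : Prop :=
  (forall psi1 psi2, Hinf T psi1 -> (forall x, inB T x -> psi1 x = psi2 x) ->
      tau psi1 = tau psi2) /\
  (forall psi1 psi2, Hinf T psi1 -> Hinf T psi2 ->
      tau (fun x => Cadd (psi1 x) (psi2 x)) = Cadd (tau psi1) (tau psi2)) /\
  (forall c psi, Hinf T psi -> tau (fun x => Cmul c (psi x)) = Cmul c (tau psi)) /\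
  (forall psi1 psi2, Hinf T psi1 -> Hinf T psi2 ->
      tau (fun x => Cmul (psi1 x) (psi2 x)) = Cmul (tau psi1) (tau psi2)) /\
  (exists psi, Hinf T psi /\ tau psi <> C0) /\
  (forall g, Au T g -> tau g = g g0).

Definition upd {X : Type} (xs : nat -> X) (i : nat) (y : X) : nat -> X :=
  fun j => if Nat.eqb j i then y else xs j.

Fixpoint Rprod (n : nat) (r : nat -> R) : R :=
  match n with O => 1 | S n' => Rprod n' r * r n' end.

(* A is a continuous n-linear form on C(K), acting on the first n entries
   of a sequence of arguments. *)
Definition cmultilinear {K : Type} (T : topology K) (n : nat)
    (A : (nat -> (K -> C)) -> C) : Prop :=
  (forall xs ys, (forall i, (i < n)%nat -> xs i = ys i) -> A xs = A ys) /\
  (forall xs i y z, (forall j, cont T (xs j)) -> cont T y -> cont T z -> (i < n)%nat ->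
      A (upd xs i (fadd y z)) = Cadd (A (upd xs i y)) (A (upd xs i z))) /\
  (forall xs i c y, (forall j, cont T (xs j)) -> cont T y -> (i < n)%nat ->
      A (upd xs i (fscal c y)) = Cmul c (A (upd xs i y))) /\
  (exists M, forall xs rs,
      (forall i, (i < n)%nat -> cont T (xs i) /\ 0 <= rs i /\ normle (xs i) (rs i)) ->
      Cmod (A xs) <= M * Rprod n rs).

Definition cpoly {K : Type} (T : topology K) (P : (K -> C) -> C) : Prop :=
  exists (N : nat) (A : nat -> (nat -> (K -> C)) -> C),
    (forall n, cmultilinear T n (A n)) /\
    forall x, cont T x -> P x = Csum N (fun n => A n (fun _ => x)).

Definition directed {D : Type} (le : D -> D -> Prop) : Prop :=
  (exists d : D, True) /\ (forall a, le a a) /\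
  (forall a b c, le a b -> le b c -> le a c) /\
  (forall a b, exists c, le a c /\ le b c).

Definition net_lim {D : Type} (le : D -> D -> Prop) (z : D -> C) (l : C) : Prop :=
  forall eps, 0 < eps -> exists a0, forall a, le a0 a -> Cmod (Csub (z a) l) < eps.

Definition Cl {K : Type} (T : topology K) (psi : (K -> C) -> C) (g0 : K -> C)
    (lam : C) : Prop :=
  exists (D : Type) (le : D -> D -> Prop) (f : D -> (K -> C)),
    directed le /\ (forall a, inB T (f a)) /\
    (forall P, cpoly T P -> net_lim le (fun a => P (f a)) (P g0)) /\
    net_lim le (fun a => psi (f a)) lam.

(* Main.v *)
Require Import Defs.
From Stdlib Require Import Reals List.
From Stdlib Require Import Lra Lia Psatz Classical FunctionalExtensionality.
From Coquelicot Require Import Coquelicot.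
Import Defs.
Open Scope R_scope.
Notation Cmod := Complex.Cmod (only parsing).
Notation Copp := Complex.Copp (only parsing).

Lemma Cmul_e : Cmul = Cmult. Proof. reflexivity. Qed.
Lemma Cadd_e : Cadd = Cplus. Proof. reflexivity. Qed.
Lemma Csub_e : Csub = Cminus. Proof. reflexivity. Qed.
Lemma Copp_e : Defs.Copp = Complex.Copp. Proof. reflexivity. Qed.
Lemma Cmod_e : Defs.Cmod = Complex.Cmod. Proof. reflexivity. Qed.
Lemma C0_e : C0 = RtoC 0. Proof. reflexivity. Qed.
Lemma C1_e : C1 = RtoC 1. Proof. reflexivity. Qed.

Ltac toC := rewrite ?Cadd_e, ?Csub_e, ?Cmul_e, ?Copp_e, ?Cmod_e, ?C0_e, ?C1_e in *.
Ltac ceq := match goal with |- @eq _ ?a ?b => change (@eq Complex.C a b) end.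
Ltac cring := ceq; first [ring | symmetry; ring].

Lemma Cmod_sub_sym (x y : Complex.C) : Cmod (x - y) = Cmod (y - x).
Proof. replace (x - y)%C with (- (y - x))%C by ring. apply Cmod_opp. Qed.

Lemma Cmod_tri3 (x y z : Complex.C) : Cmod (x - z) <= Cmod (x - y) + Cmod (y - z).
Proof. replace (x - z)%C with ((x - y) + (y - z))%C by ring. apply Cmod_triangle. Qed.

Lemma Cmod_sub_le (x y : Complex.C) : Cmod (x - y) <= Cmod x + Cmod y.
Proof. unfold Cminus. rewrite <- (Cmod_opp y). apply Cmod_triangle. Qed.

Lemma Cmod_rev (x y : Complex.C) : Cmod x - Cmod y <= Cmod (x - y).
Proof. pose proof (Cmod_triangle (x - y) y). replace (x - y + y)%C with x in H by ring. lra. Qed.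

Section Cont.
Context {K : Type} (T : topology K).

Lemma cont_const (c : Complex.C) : cont T (fun _ => c).
Proof.
  intros k eps He. exists (fun _ => True). split; [apply opn_full|]. split; auto.
  intros. toC. replace (c - c)%C with (RtoC 0) by ring. rewrite Cmod_0. lra.
Qed.

Lemma cont_op2 (op : Complex.C -> Complex.C -> Complex.C) f g :
  (forall z w eps, 0 < eps -> exists d, 0 < d /\ forall z' w',
      Cmod (z' - z) < d -> Cmod (w' - w) < d -> Cmod (op z' w' - op z w) < eps) ->
  cont T f -> cont T g -> cont T (fun k => op (f k) (g k)).
Proof.
  intros Hop Hf Hg k eps He.
  destruct (Hop (f k) (g k) eps He) as [d [Hd H]].
  destruct (Hf k d Hd) as [U [HU [HUk HU']]].
  destruct (Hg k d Hd) as [V [HV [HVk HV']]].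
  exists (fun x => U x /\ V x). split; [apply opn_inter; auto|]. split; [auto|].
  intros k' [H1 H2]. toC. apply H; [apply HU'|apply HV']; auto.
Qed.

Lemma cont_op1 (op : Complex.C -> Complex.C) f :
  (forall z eps, 0 < eps -> exists d, 0 < d /\ forall z',
      Cmod (z' - z) < d -> Cmod (op z' - op z) < eps) ->
  cont T f -> cont T (fun k => op (f k)).
Proof.
  intros Hop Hf k eps He.
  destruct (Hop (f k) eps He) as [d [Hd H]].
  destruct (Hf k d Hd) as [U [HU [HUk HU']]].
  exists U. split; [auto|]. split; [auto|]. intros k' H1. toC. apply H. apply HU'. auto.
Qed.

Lemma cont_add f g : cont T f -> cont T g -> cont T (fun k => Cplus (f k) (g k)).
Proof.
  apply cont_op2. intros z w eps He. exists (eps/2). split; [lra|].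
  intros z' w' H1 H2. replace (z' + w' - (z + w))%C with ((z' - z) + (w' - w))%C by ring.
  eapply Rle_lt_trans; [apply Cmod_triangle|]. lra.
Qed.

Lemma cont_mul f g : cont T f -> cont T g -> cont T (fun k => Cmult (f k) (g k)).
Proof.
  apply cont_op2. intros z w eps He.
  set (m := Cmod z + Cmod w + 2).
  assert (Hm : 0 < m) by (pose proof (Cmod_ge_0 z); pose proof (Cmod_ge_0 w); unfold m; lra).
  exists (Rmin 1 (eps / m)). split.
  { apply Rmin_case; [lra| apply Rdiv_lt_0_compat; lra]. }
  intros z' w' H1 H2.
  replace (z' * w' - z * w)%C with (z' * (w' - w) + w * (z' - z))%C by ring.
  eapply Rle_lt_trans; [apply Cmod_triangle|]. rewrite !Cmod_mult.
  assert (Hz' : Cmod z' <= Cmod z + 1).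
  { pose proof (Cmod_rev z' z). pose proof (Rmin_l 1 (eps/m)). lra. }
  pose proof (Rmin_l 1 (eps/m)). pose proof (Rmin_r 1 (eps/m)).
  pose proof (Cmod_ge_0 z'). pose proof (Cmod_ge_0 w). pose proof (Cmod_ge_0 (w'-w)).
  pose proof (Cmod_ge_0 (z'-z)).
  assert (Cmod z' * Cmod (w' - w) + Cmod w * Cmod (z' - z) <= (Cmod z + 1 + Cmod w) * Rmin 1 (eps/m)).
  { assert (Cmod z' * Cmod (w' - w) <= (Cmod z + 1) * Rmin 1 (eps/m)).
    { apply Rmult_le_compat; lra. }
    assert (Cmod w * Cmod (z' - z) <= Cmod w * Rmin 1 (eps/m)) by (apply Rmult_le_compat_l; lra).
    lra. }
  assert ((Cmod z + 1 + Cmod w) * Rmin 1 (eps/m) < eps).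
  { apply Rle_lt_trans with ((Cmod z + 1 + Cmod w) * (eps/m)).
    - apply Rmult_le_compat_l; [pose proof (Cmod_ge_0 z); lra| auto].
    - unfold m. apply Rmult_lt_reg_r with (Cmod z + Cmod w + 2); [lra|].
      field_simplify; [|lra]. nra. }
  lra.
Qed.

Lemma cont_cst_fun f (c : Complex.C) : cont T f -> cont T (fun k => Cmult c (f k)).
Proof. intros; apply (cont_mul (fun _ => c) f); auto; apply cont_const. Qed.

Lemma cont_opp f : cont T f -> cont T (fun k => Complex.Copp (f k)).
Proof.
  apply cont_op1. intros z eps He. exists eps. split; auto. intros z' H.
  replace (- z' - - z)%C with (- (z' - z))%C by ring. rewrite Cmod_opp. auto.
Qed.

Lemma cont_conj f : cont T f -> cont T (fun k => Cconj (f k)).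
Proof.
  apply cont_op1. intros z eps He. exists eps. split; auto. intros z' H.
  rewrite <- Cminus_conj, Cmod_conj. auto.
Qed.

Lemma cont_inv f m : 0 < m -> (forall k, m <= Cmod (f k)) -> cont T f ->
  cont T (fun k => Cinv (f k)).
Proof.
  intros Hm Hb Hf k eps He.
  destruct (Hf k (eps * m * m)) as [U [HU [HUk HU']]]. { apply Rmult_lt_0_compat; [nra|lra]. }
  exists U. split; [auto|]. split; [auto|]. intros k' Hk'. specialize (HU' k' Hk'). toC.
  assert (H1 : f k <> RtoC 0). { intro E. specialize (Hb k). rewrite E, Cmod_0 in Hb. lra. }
  assert (H2 : f k' <> RtoC 0). { intro E. specialize (Hb k'). rewrite E, Cmod_0 in Hb. lra. }
  replace (/ f k' - / f k)%C with ((f k - f k') / (f k' * f k))%C by (field; auto).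
  rewrite Cmod_div by (apply Cmult_neq_0; auto). rewrite Cmod_mult.
  rewrite Cmod_sub_sym. pose proof (Hb k). pose proof (Hb k').
  apply Rmult_lt_reg_r with (Cmod (f k') * Cmod (f k)). nra.
  unfold Rdiv. rewrite Rmult_assoc, Rinv_l by nra. rewrite Rmult_1_r.
  apply Rlt_le_trans with (eps * m * m); auto.
  rewrite Rmult_assoc. apply Rmult_le_compat_l; [lra|]. nra.
Qed.
End Cont.

Lemma sq_le_R (x y : R) : 0 <= y -> x ^ 2 <= y ^ 2 -> x <= y.
Proof. intros. nra. Qed.

Lemma mob_ident (a z : Complex.C) :
  (Cmod (z + a)) ^ 2 + (1 - Cmod a ^ 2) * (1 - Cmod z ^ 2) = (Cmod (1 + Cconj a * z)) ^ 2.
Proof.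
  rewrite !Cmod2_alt. destruct a as [a1 a2], z as [z1 z2]. unfold Re, Im. simpl. ring.
Qed.

Lemma den_lb (a z : Complex.C) ra : Cmod a <= ra -> Cmod z <= 1 ->
  1 - ra <= Cmod (1 + Cconj a * z).
Proof.
  intros Ha Hz. pose proof (Cmod_rev 1 (- (Cconj a * z))).
  replace (1 - - (Cconj a * z))%C with (1 + Cconj a * z)%C in H by ring.
  rewrite Cmod_opp, Cmod_mult, Cmod_conj, Cmod_1 in H.
  pose proof (Cmod_ge_0 a). pose proof (Cmod_ge_0 z).
  assert (Cmod a * Cmod z <= ra) by nra. lra.
Qed.

Lemma den_ub (a z : Complex.C) : Cmod a <= 1 -> Cmod z <= 1 ->
  Cmod (1 + Cconj a * z) <= 2.
Proof.
  intros Ha Hz. eapply Rle_trans; [apply Cmod_triangle|].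
  rewrite Cmod_mult, Cmod_conj, Cmod_1.
  pose proof (Cmod_ge_0 a). pose proof (Cmod_ge_0 z). nra.
Qed.

Lemma den_nz (a z : Complex.C) ra : Cmod a <= ra -> ra < 1 -> Cmod z <= 1 ->
  (1 + Cconj a * z)%C <> RtoC 0.
Proof.
  intros. pose proof (den_lb a z ra H H1). intro E. rewrite E, Cmod_0 in H2. lra.
Qed.

Definition rho (ra rz : R) := sqrt (1 - (1 - ra ^ 2) * (1 - rz ^ 2) / 4).

Lemma rho_lt1 ra rz : 0 <= ra < 1 -> 0 <= rz < 1 -> rho ra rz < 1.
Proof.
  intros. unfold rho.
  assert (0 <= 1 - ra ^ 2 <= 1) by (split; nra). assert (0 <= 1 - rz ^ 2 <= 1) by (split; nra).
  assert ((1 - ra ^ 2) * (1 - rz ^ 2) <= 1 * 1) by (apply Rmult_le_compat; lra).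
  assert (0 < (1 - ra ^ 2) * (1 - rz ^ 2)) by (apply Rmult_lt_0_compat; nra).
  apply Rlt_le_trans with (sqrt 1); [apply sqrt_lt_1; lra| rewrite sqrt_1; lra].
Qed.

Lemma mob_bound (a z : Complex.C) ra rz : Cmod a <= ra -> ra < 1 -> Cmod z <= rz -> rz < 1 ->
  Cmod ((z + a) / (1 + Cconj a * z)) <= rho ra rz.
Proof.
  intros Ha Hra Hz Hrz.
  pose proof (Cmod_ge_0 a). pose proof (Cmod_ge_0 z).
  assert (Hnz : (1 + Cconj a * z)%C <> RtoC 0) by (apply (den_nz a z ra); lra).
  pose proof (den_lb a z ra Ha ltac:(lra)). pose proof (den_ub a z ltac:(lra) ltac:(lra)).
  rewrite Cmod_div by auto.
  set (D := Cmod (1 + Cconj a * z)) in *.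
  assert (0 < D) by lra.
  apply Rmult_le_reg_r with D; auto. unfold Rdiv. rewrite Rmult_assoc, Rinv_l, Rmult_1_r by lra.
  pose proof (mob_ident a z). fold D in H4.
  set (k := (1 - ra ^ 2) * (1 - rz ^ 2) / 4).
  assert (Hk0 : 0 <= k) by (unfold k; apply Rmult_le_pos; [apply Rmult_le_pos; nra|lra]).
  assert (0 <= 1 - ra ^ 2 <= 1) by (split; nra). assert (0 <= 1 - rz ^ 2 <= 1) by (split; nra).
  assert ((1 - ra ^ 2) * (1 - rz ^ 2) <= 1 * 1) by (apply Rmult_le_compat; lra).
  assert (Hk1 : k <= 1/4) by (unfold k; lra).
  assert (Hr : 0 <= rho ra rz) by apply sqrt_pos.
  assert (Hr2 : rho ra rz ^ 2 = 1 - k).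
  { unfold rho. fold k. simpl. rewrite Rmult_1_r. apply sqrt_sqrt. lra. }
  apply sq_le_R; [apply Rmult_le_pos; lra|].
  rewrite Rpow_mult_distr, Hr2.
  assert ((1 - ra ^ 2) * (1 - rz ^ 2) <= (1 - Cmod a ^ 2) * (1 - Cmod z ^ 2)).
  { apply Rmult_le_compat; nra. }
  assert (D ^ 2 * k <= 4 * k) by (apply Rmult_le_compat_r; nra).
  unfold k in *. nra.
Qed.

Section Mob.
Context {K : Type} (T : topology K).

Definition fmul (f g : K -> Complex.C) : K -> Complex.C := fun k => Cmult (f k) (g k).
Definition fneg (f : K -> Complex.C) : K -> Complex.C := fun k => Copp (f k).
Definition mob (a x : K -> Complex.C) : K -> Complex.C :=
  fun k => ((x k + a k) / (1 + Cconj (a k) * x k))%C.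

Lemma inB_rad f : inB T f -> exists r, 0 <= r < 1 /\ forall k, Cmod (f k) <= r.
Proof.
  intros [_ [r [Hr Hn]]]. exists (Rmax 0 r). split.
  - split; [apply Rmax_l|]. apply Rmax_lub_lt; lra.
  - intro k. eapply Rle_trans; [apply (Hn k)| apply Rmax_r].
Qed.

Lemma inB_intro f r : cont T f -> r < 1 -> (forall k, Cmod (f k) <= r) -> inB T f.
Proof. intros. split; auto. exists r. split; auto. Qed.

Lemma inB_cont f : inB T f -> cont T f.
Proof. intros [H _]; auto. Qed.

Lemma inB_fneg a : inB T a -> inB T (fneg a).
Proof.
  intros Ha. destruct (inB_rad a Ha) as [r [Hr Hn]].
  apply inB_intro with r; [apply cont_opp, inB_cont; auto| lra|].
  intros k. unfold fneg. rewrite Cmod_opp. auto.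
Qed.

Lemma inB_zero : inB T fzero.
Proof.
  apply inB_intro with 0; [apply cont_const| lra|]. intros k. unfold fzero. toC. rewrite Cmod_0. lra.
Qed.

Lemma cont_mob a x ra : cont T a -> cont T x -> 0 <= ra < 1 -> (forall k, Cmod (a k) <= ra) ->
  (forall k, Cmod (x k) <= 1) -> cont T (mob a x).
Proof.
  intros Ha Hx Hr Hak Hxk. unfold mob, Cdiv.
  apply (cont_mul T (fun k => x k + a k)%C (fun k => / (1 + Cconj (a k) * x k))%C).
  - apply cont_add; auto.
  - apply cont_inv with (1 - ra); [lra| |].
    + intros k. apply den_lb; auto.
    + apply (cont_add T (fun _ => RtoC 1) (fun k => Cconj (a k) * x k)%C); [apply cont_const|].
      apply (cont_mul T (fun k => Cconj (a k)) x); auto. apply cont_conj; auto.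
Qed.

Lemma inB_mob a x : inB T a -> inB T x -> inB T (mob a x).
Proof.
  intros Ha Hx. destruct (inB_rad a Ha) as [ra [Hra Hna]]. destruct (inB_rad x Hx) as [rx [Hrx Hnx]].
  apply inB_intro with (rho ra rx).
  - apply cont_mob with ra; auto using inB_cont. intro k. specialize (Hnx k). lra.
  - apply rho_lt1; auto.
  - intro k. unfold mob. apply mob_bound; auto; lra.
Qed.
End Mob.

Definition mpt (a z : Complex.C) : Complex.C := ((z + a) / (1 + Cconj a * z))%C.

Lemma nz_of_Cmod (z : Complex.C) : 0 < Cmod z -> z <> RtoC 0.
Proof. intros H E. rewrite E, Cmod_0 in H. lra. Qed.

Lemma s_nz (a : Complex.C) : Cmod a < 1 -> (1 - Cconj a * a)%C <> RtoC 0.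
Proof.
  intros Ha E. assert (Cmod (Cconj a * a) = 1).
  { replace (Cconj a * a)%C with (RtoC 1 - (1 - Cconj a * a))%C by ring. rewrite E.
    replace (RtoC 1 - RtoC 0)%C with (RtoC 1) by ring. apply Cmod_1. }
  rewrite Cmod_mult, Cmod_conj in H. pose proof (Cmod_ge_0 a). nra.
Qed.

Lemma Cmod_s (a : Complex.C) : Cmod a <= 1 -> Cmod (1 - Cconj a * a) <= 2.
Proof.
  intros. eapply Rle_trans; [apply Cmod_sub_le|]. rewrite Cmod_1, Cmod_mult, Cmod_conj.
  pose proof (Cmod_ge_0 a). nra.
Qed.

Lemma mpt_inv (a z : Complex.C) : Cmod a < 1 -> Cmod z < 1 -> mpt a (mpt (- a) z) = z.
Proof.
  intros Ha Hz. unfold mpt. rewrite Copp_conj.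
  pose proof (mob_bound (-a) z (Cmod a) (Cmod z)).
  rewrite Cmod_opp in H. specialize (H ltac:(lra) Ha ltac:(lra) Hz).
  assert (H1 : (1 + - Cconj a * z)%C <> RtoC 0).
  { replace (- Cconj a)%C with (Cconj (- a)) by apply Copp_conj. apply (den_nz _ _ (Cmod a)); try rewrite Cmod_opp; lra. }
  assert (H2 : (1 + Cconj a * ((z + - a) / (1 + - Cconj a * z)))%C <> RtoC 0).
  { apply (den_nz _ _ (Cmod a)); try lra. rewrite <- Copp_conj.
    pose proof (rho_lt1 (Cmod a) (Cmod z) ltac:(split; [apply Cmod_ge_0|lra]) ltac:(split; [apply Cmod_ge_0|lra])).
    lra. }
  pose proof (s_nz a Ha).
  revert H1 H2 H0. generalize (Cconj a). intros b H1 H2 H0.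
  assert (E : ((z + - a) / (1 + - b * z) + a)%C = (z * (1 - b * a) / (1 + - b * z))%C) by (field; auto).
  assert (E2 : (1 + b * ((z + - a) / (1 + - b * z)))%C = ((1 - b * a) / (1 + - b * z))%C) by (field; auto).
  rewrite E, E2. field. split; auto.
Qed.

Lemma mpt_self (a : Complex.C) : Cmod a < 1 -> mpt (- a) a = RtoC 0.
Proof.
  intros. unfold mpt. replace (a + - a)%C with (RtoC 0) by ring. unfold Cdiv. ring.
Qed.

Lemma mpt_zero (a : Complex.C) : mpt a (RtoC 0) = a.
Proof. unfold mpt. replace (RtoC 0 + a)%C with a by ring. replace (1 + Cconj a * 0)%C with (RtoC 1) by ring.
  field. Qed.

Lemma mpt_diff (a z w : Complex.C) : (1 + Cconj a * z)%C <> RtoC 0 -> (1 + Cconj a * w)%C <> RtoC 0 ->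
  (mpt a w - mpt a z)%C = ((1 - Cconj a * a) * (w - z) / ((1 + Cconj a * z) * (1 + Cconj a * w)))%C.
Proof. intros. unfold mpt. revert H H0. generalize (Cconj a). intros b H H0. field. auto. Qed.

Lemma mpt_rem (a z w : Complex.C) : (1 + Cconj a * z)%C <> RtoC 0 -> (1 + Cconj a * w)%C <> RtoC 0 ->
  (mpt a w - mpt a z - (1 - Cconj a * a) / (1 + Cconj a * z) ^ 2 * (w - z))%C =
  (- (1 - Cconj a * a) * Cconj a * (w - z) ^ 2 / ((1 + Cconj a * z) ^ 2 * (1 + Cconj a * w)))%C.
Proof. intros. unfold mpt. revert H H0. generalize (Cconj a). intros b H H0. simpl. field. auto. Qed.

Lemma mpt_lip (a z w : Complex.C) ra : Cmod a <= ra -> ra < 1 -> Cmod z <= 1 -> Cmod w <= 1 ->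
  Cmod (mpt a w - mpt a z) <= 2 / (1 - ra) ^ 2 * Cmod (w - z).
Proof.
  intros Ha Hr Hz Hw.
  pose proof (den_lb a z ra Ha Hz). pose proof (den_lb a w ra Ha Hw).
  assert (Ha1 : Cmod a <= 1) by lra.
  rewrite mpt_diff by (apply nz_of_Cmod; lra).
  rewrite Cmod_div by (apply Cmult_neq_0; apply nz_of_Cmod; lra).
  rewrite !Cmod_mult. pose proof (Cmod_s a Ha1). pose proof (Cmod_ge_0 (w - z)).
  pose proof (Cmod_ge_0 (1 - Cconj a * a)).
  set (D1 := Cmod (1 + Cconj a * z)) in *. set (D2 := Cmod (1 + Cconj a * w)) in *.
  set (S := Cmod (1 - Cconj a * a)) in *. set (X := Cmod (w - z)) in *.
  assert (0 < 1 - ra) by lra.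
  assert ((1 - ra) ^ 2 <= D1 * D2) by (simpl; rewrite Rmult_1_r; apply Rmult_le_compat; lra).
  unfold Rdiv. apply Rle_trans with (S * X * / (1 - ra) ^ 2).
  - apply Rmult_le_compat_l; [nra|]. apply Rinv_le_contravar; auto. simpl; nra.
  - assert (0 < / (1 - ra) ^ 2) by (apply Rinv_0_lt_compat; apply pow_lt; lra).
    assert (S * X <= 2 * X) by nra. nra.
Qed.

Lemma mpt_rem_bound (a z w : Complex.C) ra : Cmod a <= ra -> ra < 1 -> Cmod z <= 1 -> Cmod w <= 1 ->
  Cmod (mpt a w - mpt a z - (1 - Cconj a * a) / (1 + Cconj a * z) ^ 2 * (w - z))
   <= 2 / (1 - ra) ^ 3 * Cmod (w - z) ^ 2.
Proof.
  intros Ha Hr Hz Hw.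
  pose proof (den_lb a z ra Ha Hz). pose proof (den_lb a w ra Ha Hw).
  assert (Ha1 : Cmod a <= 1) by lra.
  rewrite mpt_rem by (apply nz_of_Cmod; lra).
  rewrite Cmod_div by (apply Cmult_neq_0; [apply Cpow_nz|]; apply nz_of_Cmod; lra).
  rewrite !Cmod_mult, !Cmod_pow, Cmod_opp, Cmod_conj. pose proof (Cmod_s a Ha1).
  pose proof (Cmod_ge_0 (w - z)). pose proof (Cmod_ge_0 (1 - Cconj a * a)). pose proof (Cmod_ge_0 a).
  set (D1 := Cmod (1 + Cconj a * z)) in *. set (D2 := Cmod (1 + Cconj a * w)) in *.
  set (S := Cmod (1 - Cconj a * a)) in *. set (X := Cmod (w - z)) in *.
  assert (0 < 1 - ra) by lra.
  assert (E3 : (1 - ra) ^ 3 <= D1 ^ 2 * D2).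
  { replace ((1 - ra) ^ 3) with ((1 - ra) ^ 2 * (1 - ra)) by ring.
    apply Rmult_le_compat; [nra|lra| apply pow_incr; lra | lra]. }
  unfold Rdiv. apply Rle_trans with (S * Cmod a * X ^ 2 * / (1 - ra) ^ 3).
  - apply Rmult_le_compat_l; [apply Rmult_le_pos; [nra| simpl; nra]|].
    apply Rinv_le_contravar; [apply pow_lt; lra | exact E3].
  - assert (0 < / (1 - ra) ^ 3) by (apply Rinv_0_lt_compat; apply pow_lt; lra).
    assert (S * Cmod a * X ^ 2 <= 2 * X ^ 2).
    { assert (S * Cmod a <= 2) by nra. apply Rmult_le_compat_r; [nra|lra]. }
    nra.
Qed.

Section Trans.
Context {K : Type} (T : topology K).

Lemma cont_fadd f g : cont T f -> cont T g -> cont T (fadd f g).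
Proof. intros. unfold fadd. toC. apply cont_add; auto. Qed.
Lemma cont_fsub f g : cont T f -> cont T g -> cont T (fsub f g).
Proof. intros. unfold fsub. toC. unfold Cminus. apply cont_add; auto. apply cont_opp; auto. Qed.
Lemma cont_fmul f g : cont T f -> cont T g -> cont T (fmul f g).
Proof. intros. unfold fmul. apply cont_mul; auto. Qed.
Lemma cont_fscal c f : cont T f -> cont T (fscal c f).
Proof. intros. unfold fscal. toC. apply cont_cst_fun; auto. Qed.

Lemma inB_le1 x : inB T x -> forall k, Cmod (x k) <= 1.
Proof. intros Hx. destruct (inB_rad T x Hx) as [r [Hr Hn]]. intro k. specialize (Hn k). lra. Qed.

Lemma mob_pt (a x : K -> Complex.C) (k : K) : mob a x k = mpt (a k) (x k).
Proof. reflexivity. Qed.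

Definition dmob (a x : K -> Complex.C) : K -> Complex.C :=
  fun k => ((1 - Cconj (a k) * a k) / (1 + Cconj (a k) * x k) ^ 2)%C.

Lemma dmob_cont a x ra : cont T a -> cont T x -> 0 <= ra < 1 -> (forall k, Cmod (a k) <= ra) ->
  (forall k, Cmod (x k) <= 1) -> cont T (dmob a x).
Proof.
  intros Ha Hx Hr Hak Hxk. unfold dmob, Cdiv.
  assert (HD : cont T (fun k => 1 + Cconj (a k) * x k)%C).
  { apply (cont_add T (fun _ => RtoC 1) (fun k => Cconj (a k) * x k)%C); [apply cont_const|].
    apply (cont_mul T (fun k => Cconj (a k)) x); auto. apply cont_conj; auto. }
  apply (cont_mul T (fun k => 1 - Cconj (a k) * a k)%C (fun k => / (1 + Cconj (a k) * x k) ^ 2)%C).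
  - unfold Cminus. apply (cont_add T (fun _ => RtoC 1) (fun k => - (Cconj (a k) * a k))%C); [apply cont_const|].
    apply (cont_opp T (fun k => Cconj (a k) * a k)%C).
    apply (cont_mul T (fun k => Cconj (a k)) a); auto. apply cont_conj; auto.
  - apply cont_inv with ((1 - ra) ^ 2); [apply pow_lt; lra| |].
    + intros k. rewrite Cmod_pow. apply pow_incr. split; [lra|]. apply den_lb; auto.
    + simpl. apply (cont_mul T (fun k => 1 + Cconj (a k) * x k)%C (fun k => (1 + Cconj (a k) * x k) * 1)%C); auto.
      apply (cont_mul T (fun k => 1 + Cconj (a k) * x k)%C (fun _ => RtoC 1)); auto. apply cont_const.
Qed.

Lemma dmob_bound a x ra : 0 <= ra < 1 -> (forall k, Cmod (a k) <= ra) ->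
  (forall k, Cmod (x k) <= 1) -> forall k, Cmod (dmob a x k) <= 2 / (1 - ra) ^ 2.
Proof.
  intros Hr Hak Hxk k. unfold dmob. pose proof (den_lb (a k) (x k) ra (Hak k) (Hxk k)).
  rewrite Cmod_div by (apply Cpow_nz; apply nz_of_Cmod; lra). rewrite Cmod_pow.
  pose proof (Cmod_s (a k) ltac:(specialize (Hak k); lra)).
  unfold Rdiv. apply Rmult_le_compat; [apply Cmod_ge_0| apply Rlt_le, Rinv_0_lt_compat; apply pow_lt; lra| auto|].
  apply Rinv_le_contravar; [apply pow_lt; lra| apply pow_incr; lra].
Qed.

Lemma Hinf_mob a psi : inB T a -> Hinf T psi -> Hinf T (fun x => psi (mob a x)).
Proof.
  intros Ha [Hh [M HM]]. split.
  2:{ exists M. intros x Hx. apply HM, inB_mob; auto. }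
  intros x Hx.
  destruct (inB_rad T a Ha) as [ra [Hra Hna]].
  pose proof (inB_le1 x Hx) as Hx1.
  destruct (Hh (mob a x) (inB_mob T a x Ha Hx)) as [L [[HLadd [HLsc [ML HML]]] HL]].
  set (d := dmob a x).
  assert (Hdc : cont T d) by (apply dmob_cont with ra; auto using inB_cont).
  assert (Hdb := dmob_bound a x ra Hra Hna Hx1). fold d in Hdb.
  set (c0 := 1 - ra). assert (Hc0 : 0 < c0) by (unfold c0; lra).
  set (Ch := 2 / c0 ^ 2). assert (HCh : 0 < Ch) by (unfold Ch; apply Rdiv_lt_0_compat; [lra| apply pow_lt; lra]).
  set (Cr := 2 / c0 ^ 3). assert (HCr : 0 < Cr) by (unfold Cr; apply Rdiv_lt_0_compat; [lra| apply pow_lt; lra]).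
  set (Mp := Rabs ML + 1). assert (HMp : 0 < Mp) by (unfold Mp; pose proof (Rabs_pos ML); lra).
  assert (HMp' : ML <= Mp) by (unfold Mp; pose proof (Rle_abs ML); lra).
  assert (Hfmul : forall h r, normle h r -> normle (fmul d h) (Ch * r)).
  { intros h r Hn k. unfold fmul. toC. unfold normle in Hn. toC. rewrite Cmod_mult.
    specialize (Hn k). specialize (Hdb k). pose proof (Cmod_ge_0 (h k)). pose proof (Cmod_ge_0 (d k)).
    apply Rmult_le_compat; auto. }
  exists (fun h => L (fmul d h)). split.
  { split; [|split].
    - intros h1 h2 H1 H2. rewrite <- HLadd by (apply cont_fmul; auto).
      f_equal. apply functional_extensionality. intro k. unfold fmul, fadd. toC. cring.
    - intros c h H1. rewrite <- HLsc by (apply cont_fmul; auto).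
      f_equal. apply functional_extensionality. intro k. unfold fmul, fscal. toC. cring.
    - exists (ML * Ch). intros h r H1 H2. rewrite Rmult_assoc. apply HML; [apply cont_fmul; auto|].
      apply Hfmul; auto. }
  intros eps Heps.
  destruct (HL (eps / (2 * Ch))) as [d1 [Hd1 HL1]]. { apply Rdiv_lt_0_compat; lra. }
  exists (Rmin (d1 / Ch) (eps / (2 * Mp * Cr))). split.
  { apply Rmin_case; apply Rdiv_lt_0_compat; try lra. apply Rmult_lt_0_compat; lra. }
  intros h r Hhc Hr0 Hrd Hn HB.
  set (w := fadd x h) in *.
  assert (Hw1 := inB_le1 w HB).
  set (h' := fsub (mob a w) (mob a x)).
  assert (Hxc : cont T x) by (apply inB_cont; auto).
  assert (Hwc : cont T w) by (apply inB_cont; auto).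
  assert (Hh'c : cont T h').
  { apply cont_fsub; apply cont_mob with ra; auto using inB_cont. }
  assert (Hhk : forall k, h k = (w k - x k)%C).
  { intro k. unfold w, fadd. toC. cring. }
  assert (Hn' : normle h' (Ch * r)).
  { intro k. unfold h', fsub. toC. rewrite !mob_pt.
    eapply Rle_trans; [apply (mpt_lip (a k) (x k) (w k) ra); auto; lra|].
    rewrite <- Hhk. apply Rmult_le_compat_l; [lra|]. specialize (Hn k). toC. auto. }
  assert (Heq : fadd (mob a x) h' = mob a w).
  { apply functional_extensionality. intro k. unfold h', fadd, fsub. toC. cring. }
  assert (HB' : inB T (fadd (mob a x) h')) by (rewrite Heq; apply inB_mob; auto).
  assert (Hr1 : r <= d1 / Ch) by (eapply Rle_trans; [apply Hrd| apply Rmin_l]).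
  assert (Hr2 : r <= eps / (2 * Mp * Cr)) by (eapply Rle_trans; [apply Hrd| apply Rmin_r]).
  assert (Hchr : Ch * r <= d1).
  { unfold Rdiv in Hr1. apply Rmult_le_compat_l with (r := Ch) in Hr1; [|lra].
    rewrite <- Rmult_assoc, (Rmult_comm Ch d1), Rmult_assoc, Rinv_r, Rmult_1_r in Hr1; lra. }
  specialize (HL1 h' (Ch * r) Hh'c ltac:(nra) Hchr Hn' HB').
  rewrite Heq in HL1.
  set (R0 := fsub h' (fmul d h)).
  assert (HR0c : cont T R0) by (apply cont_fsub; auto; apply cont_fmul; auto).
  assert (HR0n : normle R0 (Cr * r ^ 2)).
  { intro k. unfold R0, h', fsub, fmul, d, dmob. toC. rewrite !mob_pt, Hhk.
    eapply Rle_trans; [apply (mpt_rem_bound (a k) (x k) (w k) ra); auto; lra|].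
    unfold Cr, c0. apply Rmult_le_compat_l; [apply Rlt_le, Rdiv_lt_0_compat; [lra|apply pow_lt; lra]|].
    rewrite <- Hhk. specialize (Hn k). toC. apply pow_incr. split; auto. apply Cmod_ge_0. }
  assert (Hsplit : L h' = Cadd (L (fmul d h)) (L R0)).
  { rewrite <- HLadd by (auto; apply cont_fmul; auto). f_equal.
    apply functional_extensionality. intro k. unfold R0, fadd, fsub. toC. cring. }
  specialize (HML R0 (Cr * r ^ 2) HR0c HR0n).
  assert (HLR : Cmod (L R0) <= eps * r / 2).
  { toC. eapply Rle_trans; [apply HML|].
    apply Rle_trans with (Mp * (Cr * r ^ 2)). { apply Rmult_le_compat_r; auto. apply Rmult_le_pos; [lra| apply pow_le; auto]. }
    assert (Mp * Cr * r <= eps / 2).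
    { unfold Rdiv in Hr2. apply Rmult_le_compat_l with (r := 2 * Mp * Cr) in Hr2; [|apply Rmult_le_pos; lra].
      rewrite Rinv_mult in Hr2. field_simplify in Hr2; lra. }
    replace (Mp * (Cr * r ^ 2)) with ((Mp * Cr * r) * r) by ring. nra. }
  toC. rewrite Hsplit in HL1. toC.
  replace (psi (mob a w) - psi (mob a x) - L (fmul d h))%C with
    ((psi (mob a w) - psi (mob a x) - (L (fmul d h) + L R0)) + L R0)%C by ring.
  eapply Rle_trans; [apply Cmod_triangle|].
  assert (eps / (2 * Ch) * (Ch * r) = eps * r / 2) by (field; lra). lra.
Qed.

Lemma Au_mob a g : inB T a -> Au T g -> Au T (fun x => g (mob a x)).
Proof.
  intros Ha [Hg Hu]. split; [apply Hinf_mob; auto|].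
  destruct (inB_rad T a Ha) as [ra [Hra Hna]].
  intros eps Heps. destruct (Hu eps Heps) as [dg [Hdg Hug]].
  exists (dg * (1 - ra) ^ 2 / 2). split.
  { apply Rdiv_lt_0_compat; [apply Rmult_lt_0_compat; [auto| apply pow_lt; lra]| lra]. }
  intros f1 f2 H1 H2 Hn. apply Hug; try apply inB_mob; auto.
  intro k. unfold fsub. toC. rewrite !mob_pt.
  eapply Rle_trans; [apply (mpt_lip _ _ _ ra); [auto| lra | apply inB_le1; auto | apply inB_le1; auto]|].
  specialize (Hn k). unfold fsub in Hn. toC.
  assert (0 < (1 - ra) ^ 2) by (apply pow_lt; lra).
  apply Rle_trans with (2 / (1 - ra) ^ 2 * (dg * (1 - ra) ^ 2 / 2)).
  - apply Rmult_le_compat_l; auto. apply Rlt_le, Rdiv_lt_0_compat; lra.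
  - right. field. lra.
Qed.

Lemma mob_inv_fun a x : inB T a -> inB T x -> mob a (mob (fneg a) x) = x.
Proof.
  intros Ha Hx. destruct (inB_rad T a Ha) as [ra [Hra Hna]]. destruct (inB_rad T x Hx) as [rx [Hrx Hnx]].
  apply functional_extensionality. intro k. rewrite mob_pt. unfold mob, fneg.
  apply mpt_inv; [specialize (Hna k)| specialize (Hnx k)]; lra.
Qed.

Lemma mob_self a : inB T a -> mob (fneg a) a = fzero.
Proof.
  intros Ha. destruct (inB_rad T a Ha) as [ra [Hra Hna]].
  apply functional_extensionality. intro k. unfold fzero. toC. apply (mpt_self (a k)). specialize (Hna k). lra.
Qed.

Lemma mob_zero (a : K -> Complex.C) : mob a fzero = a.
Proof. apply functional_extensionality. intro k. apply mpt_zero. Qed.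

Lemma Mfib_mob f0 tau : inB T f0 -> Mfib T f0 tau ->
  Mfib T fzero (fun psi => tau (fun x => psi (mob (fneg f0) x))).
Proof.
  intros Hf0 [H1 [H2 [H3 [H4 [H5 H6]]]]].
  assert (Hn : inB T (fneg f0)) by (apply inB_fneg; auto).
  split; [|split; [|split; [|split; [|split]]]].
  - intros p1 p2 Hp E. apply H1; [apply Hinf_mob; auto|]. intros x Hx. apply E. apply inB_mob; auto.
  - intros p1 p2 Hp1 Hp2. apply (H2 (fun x => p1 (mob (fneg f0) x)) (fun x => p2 (mob (fneg f0) x)));
      apply Hinf_mob; auto.
  - intros c p Hp. apply (H3 c (fun x => p (mob (fneg f0) x))); apply Hinf_mob; auto.
  - intros p1 p2 Hp1 Hp2. apply (H4 (fun x => p1 (mob (fneg f0) x)) (fun x => p2 (mob (fneg f0) x)));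
      apply Hinf_mob; auto.
  - destruct H5 as [psi [Hp Hne]]. exists (fun x => psi (mob f0 x)). split; [apply Hinf_mob; auto|].
    rewrite <- (H1 psi); auto. intros x Hx. rewrite mob_inv_fun; auto.
  - intros g Hg. rewrite (H6 (fun x => g (mob (fneg f0) x))). 2: apply Au_mob; auto.
    simpl. rewrite mob_self; auto.
Qed.
End Trans.

Lemma upd_eq {X} (xs : nat -> X) i y : upd xs i y i = y.
Proof. unfold upd. rewrite Nat.eqb_refl. auto. Qed.
Lemma upd_neq {X} (xs : nat -> X) i y j : j <> i -> upd xs i y j = xs j.
Proof. intros. unfold upd. destruct (Nat.eqb_spec j i); [lia|auto]. Qed.
Lemma upd_upd {X} (xs : nat -> X) i y z : upd (upd xs i y) i z = upd xs i z.
Proof. apply functional_extensionality. intro j. unfold upd. destruct (Nat.eqb j i); auto. Qed.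
Lemma upd_comm {X} (xs : nat -> X) i j y z : i <> j -> upd (upd xs i y) j z = upd (upd xs j z) i y.
Proof. intros. apply functional_extensionality. intro l. unfold upd.
  destruct (Nat.eqb_spec l j), (Nat.eqb_spec l i); auto; lia. Qed.
Lemma upd_id {X} (xs : nat -> X) i : upd xs i (xs i) = xs.
Proof. apply functional_extensionality. intro l. unfold upd. destruct (Nat.eqb_spec l i); subst; auto. Qed.

Lemma Rprod_ext n r r' : (forall i, (i < n)%nat -> r i = r' i) -> Rprod n r = Rprod n r'.
Proof. induction n; simpl; intros; auto. rewrite IHn by (intros; apply H; lia). rewrite H by lia. auto. Qed.

Lemma Rprod_nonneg n r : (forall i, (i < n)%nat -> 0 <= r i) -> 0 <= Rprod n r.
Proof. induction n; simpl; intros; [lra|]. apply Rmult_le_pos; [apply IHn; intros; apply H; lia| apply H; lia]. Qed.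

Definition rcons (c : R) (rs : nat -> R) : nat -> R := fun i => match i with O => c | S i' => rs i' end.

Lemma Rprod_cons n c rs : Rprod (S n) (rcons c rs) = c * Rprod n rs.
Proof. induction n; simpl in *; [ring|]. rewrite IHn. ring. Qed.

Lemma Rprod_upd_mul n rs i t : (i < n)%nat -> Rprod n (upd rs i (rs i * t)) = Rprod n rs * t.
Proof.
  induction n; intros Hi; [lia|]. simpl.
  destruct (Nat.eq_dec i n).
  - subst. rewrite upd_eq. rewrite (Rprod_ext n (upd rs n (rs n * t)) rs).
    + ring.
    + intros j Hj. apply upd_neq. lia.
  - rewrite IHn by lia. rewrite upd_neq by lia. ring.
Qed.

Fixpoint psum (m : nat) (f : nat -> nat) : nat := match m with O => O | S m' => (psum m' f + f m')%nat end.

Lemma psum_shift m f : psum (S m) f = (f O + psum m (fun i => f (S i)))%nat.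
Proof. induction m; simpl in *; [lia|]. rewrite IHm. lia. Qed.



Lemma psum_ge m f i : (i < m)%nat -> (f i <= psum m f)%nat.
Proof. induction m; simpl; intros H; [lia|]. destruct (Nat.eq_dec i m); [subst; lia|]. assert (i < m)%nat by lia. specialize (IHm H0). lia. Qed.

Lemma psum_upd m f i v : (i < m)%nat -> (psum m (upd f i v) + f i = psum m f + v)%nat.
Proof.
  induction m; simpl; intros H; [lia|]. destruct (Nat.eq_dec i m).
  - subst. rewrite upd_eq. assert (psum m (upd f m v) = psum m f).
    { clear. assert (forall j, (j <= m)%nat -> psum j (upd f m v) = psum j f); [|apply H; lia].
      induction j; simpl; intros; auto. rewrite IHj by lia. rewrite upd_neq by lia. auto. }
    lia.
  - assert (i < m)%nat by lia. specialize (IHm H0). rewrite upd_neq by lia. lia.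
Qed.

Section Poly.
Context {K : Type} (T : topology K).

Definition cons_f (c : K -> Complex.C) (zs : nat -> K -> Complex.C) : nat -> K -> Complex.C :=
  fun i => match i with O => c | S i' => zs i' end.

Lemma cons_upd c zs i w : cons_f c (upd zs i w) = upd (cons_f c zs) (S i) w.
Proof. apply functional_extensionality. intro j. destruct j; reflexivity. Qed.

Lemma ml_cons n A c r : cmultilinear T (S n) A -> cont T c -> 0 <= r -> normle c r ->
  cmultilinear T n (fun zs => A (cons_f c zs)).
Proof.
  intros [H1 [H2 [H3 [M HM]]]] Hc Hr Hn. split; [|split; [|split]].
  - intros xs ys E. apply H1. intros i Hi. destruct i; simpl; auto. apply E. lia.
  - intros xs i y z Hx Hy Hz Hi. rewrite !cons_upd. apply H2; auto; [|lia]. intro j; destruct j; simpl; auto.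
  - intros xs i c' y Hx Hy Hi. rewrite !cons_upd. apply H3; auto; [|lia]. intro j; destruct j; simpl; auto.
  - exists (M * r). intros xs rs H. specialize (HM (cons_f c xs) (rcons r rs)).
    rewrite Rprod_cons in HM. rewrite Rmult_assoc. apply HM. intros i Hi. destruct i; simpl.
    + auto.
    + apply H. lia.
Qed.

Lemma fmul_fadd_l (y z w : K -> Complex.C) : fmul (fadd y z) w = fadd (fmul y w) (fmul z w).
Proof. apply functional_extensionality. intro k. unfold fmul, fadd. toC. cring. Qed.
Lemma fmul_fadd_r (y z w : K -> Complex.C) : fmul w (fadd y z) = fadd (fmul w y) (fmul w z).
Proof. apply functional_extensionality. intro k. unfold fmul, fadd. toC. cring. Qed.
Lemma fmul_fscal_l c (y w : K -> Complex.C) : fmul (fscal c y) w = fscal c (fmul y w).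
Proof. apply functional_extensionality. intro k. unfold fmul, fscal. toC. cring. Qed.
Lemma fmul_fscal_r c (y w : K -> Complex.C) : fmul w (fscal c y) = fscal c (fmul w y).
Proof. apply functional_extensionality. intro k. unfold fmul, fscal. toC. cring. Qed.

Lemma ml_mul n A : cmultilinear T (S n) A ->
  cmultilinear T (S (S n)) (fun zs => A (upd zs O (fmul (zs O) (zs (S n))))).
Proof.
  intros [H1 [H2 [H3 [M HM]]]].
  assert (E0 : forall xs w, A (upd (upd xs O w) O (fmul (upd xs O w O) (upd xs O w (S n))))
                          = A (upd xs O (fmul w (xs (S n))))).
  { intros. rewrite upd_upd, upd_eq, upd_neq by lia. auto. }
  assert (En : forall xs w, A (upd (upd xs (S n) w) O (fmul (upd xs (S n) w O) (upd xs (S n) w (S n))))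
                          = A (upd xs O (fmul (xs O) w))).
  { intros. rewrite upd_eq, upd_neq by lia. apply H1. intros i Hi.
    destruct (Nat.eq_dec i O); [subst; rewrite !upd_eq; auto|]. rewrite !upd_neq by lia. auto. }
  assert (Ei : forall xs w i, (0 < i < S n)%nat ->
     A (upd (upd xs i w) O (fmul (upd xs i w O) (upd xs i w (S n))))
     = A (upd (upd xs O (fmul (xs O) (xs (S n)))) i w)).
  { intros. rewrite !(upd_neq xs i) by lia. rewrite upd_comm by lia. auto. }
  assert (Hcu : forall xs v, (forall j, cont T (xs j)) -> cont T v -> forall j, cont T (upd xs O v j)).
  { intros xs v Hx Hv j. unfold upd. destruct (Nat.eqb j O); auto. }
  split; [|split; [|split]].
  - intros xs ys E. apply H1. intros i Hi. destruct (Nat.eq_dec i O).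
    + subst. rewrite !upd_eq. rewrite (E O), (E (S n)) by lia. auto.
    + rewrite !upd_neq by lia. apply E. lia.
  - intros xs i y z Hx Hy Hz Hi.
    destruct (Nat.eq_dec i O); [|destruct (Nat.eq_dec i (S n))].
    + subst. rewrite !E0. rewrite fmul_fadd_l. apply H2; auto using cont_fmul; lia.
    + subst. rewrite !En. rewrite fmul_fadd_r. apply H2; auto using cont_fmul; lia.
    + rewrite !Ei by lia. apply H2; auto; [|lia]. apply Hcu; auto. apply cont_fmul; auto.
  - intros xs i c y Hx Hy Hi.
    destruct (Nat.eq_dec i O); [|destruct (Nat.eq_dec i (S n))].
    + subst. rewrite !E0. rewrite fmul_fscal_l. apply H3; auto using cont_fmul; lia.
    + subst. rewrite !En. rewrite fmul_fscal_r. apply H3; auto using cont_fmul; lia.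
    + rewrite !Ei by lia. apply H3; auto; [|lia]. apply Hcu; auto. apply cont_fmul; auto.
  - exists M. intros xs rs H. specialize (HM (upd xs O (fmul (xs O) (xs (S n)))) (upd rs O (rs O * rs (S n)))).
    rewrite Rprod_upd_mul in HM by lia. apply HM. intros i Hi.
    destruct (Nat.eq_dec i O).
    + subst. rewrite !upd_eq. destruct (H O ltac:(lia)) as [Hc0 [Hr0 Hn0]]. destruct (H (S n) ltac:(lia)) as [Hc1 [Hr1 Hn1]].
      split; [apply cont_fmul; auto| split; [apply Rmult_le_pos; auto|]].
      intro k. unfold fmul. toC. rewrite Cmod_mult. specialize (Hn0 k). specialize (Hn1 k). toC.
      apply Rmult_le_compat; auto using Cmod_ge_0.
    + rewrite !upd_neq by lia. apply H. lia.
Qed.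

Lemma ml_zero n : cmultilinear T n (fun _ => C0).
Proof.
  split; [|split; [|split]]; auto.
  - intros. toC. cring.
  - intros. toC. cring.
  - exists 0. intros. toC. rewrite Cmod_0. lra.
Qed.

Lemma Csum_zero N f : (forall k, (k < N)%nat -> f k = C0) -> Csum N f = C0.
Proof. induction N; simpl; intros; auto. rewrite IHN by (intros; apply H; lia). rewrite H by lia. toC. cring. Qed.

Lemma cpoly_hom n A : cmultilinear T n A -> cpoly T (fun x => A (fun _ => x)).
Proof.
  intros HA. exists (S n), (fun k => if Nat.eqb k n then A else (fun _ => C0)). split.
  - intro k. destruct (Nat.eqb_spec k n); [subst; auto| apply ml_zero].
  - intros x Hx. simpl. rewrite Nat.eqb_refl. rewrite Csum_zero.
    + toC. cring.
    + intros k Hk. destruct (Nat.eqb_spec k n); [lia|auto].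
Qed.

Lemma cpoly_eq (P Q : (K -> Complex.C) -> Complex.C) : (forall x, P x = Q x) -> cpoly T Q -> cpoly T P.
Proof. intros E H. replace P with Q; auto. apply functional_extensionality. intro; auto. Qed.

Definition mono (c : K -> Complex.C) (p : nat) (x : K -> Complex.C) : K -> Complex.C :=
  fun k => Cmult (c k) (Cpow (x k) p).
Definition fam (m : nat) (c : nat -> K -> Complex.C) (pw : nat -> nat) (x : K -> Complex.C) : nat -> K -> Complex.C :=
  fun i => if Nat.ltb i m then mono (c i) (pw i) x else x.
Definition good_fn (c : K -> Complex.C) := cont T c /\ exists r, 0 <= r /\ normle c r.

Lemma mono_poly_gen mu : forall m k A c pw, (m + psum m pw <= mu)%nat -> cmultilinear T (m + k) A ->
  (forall i, good_fn (c i)) -> cpoly T (fun x => A (fam m c pw x)).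
Proof.
  induction mu; intros m k A c pw Hmu HA Hc; destruct m.
  - replace (fun x => A (fam 0 c pw x)) with (fun x => A (fun _ : nat => x)).
    + apply (cpoly_hom k). auto.
    + apply functional_extensionality. intro x. f_equal.
  - simpl in Hmu. lia.
  - replace (fun x => A (fam 0 c pw x)) with (fun x => A (fun _ : nat => x)).
    + apply (cpoly_hom k). auto.
    + apply functional_extensionality. intro x. f_equal.
  - rewrite psum_shift in Hmu. destruct (pw O) as [|p] eqn:Hp.
    + set (c0 := fun k => Cmult (c O k) 1).
      assert (Hc0 : good_fn c0).
      { destruct (Hc O) as [Hcc [r [Hr Hn]]]. split.
        - unfold c0. apply (cont_mul T (c O) (fun _ => RtoC 1)); auto. apply cont_const.
        - exists r. split; auto. intro k0. unfold c0. toC. rewrite Cmod_mult, Cmod_1, Rmult_1_r. apply Hn. }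
      apply cpoly_eq with (Q := fun x => A (cons_f c0 (fam m (fun i => c (S i)) (fun i => pw (S i)) x))).
      * intro x. f_equal. apply functional_extensionality. intro i.
        destruct i; [|reflexivity]. unfold fam, mono. simpl. rewrite Hp. reflexivity.
      * apply (IHmu m k (fun zs => A (cons_f c0 zs))); [lia| |intro; apply Hc].
        destruct Hc0 as [Hcc [r [Hr Hn]]]. apply (ml_cons (m + k) A c0 r); auto.
    + set (pw' := upd pw O p).
      set (A' := fun zs : nat -> K -> Complex.C => A (upd zs O (fmul (zs O) (zs (S (m + k)))))).
      apply cpoly_eq with (Q := fun x => A' (fam (S m) c pw' x)).
      2:{ apply (IHmu (S m) (S k) A').
        -- rewrite psum_shift. unfold pw'. rewrite upd_eq.
           assert (psum m (fun i => upd pw O p (S i)) = psum m (fun i => pw (S i))).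
           { clear. induction m; simpl; auto. } lia.
        -- replace (S m + S k)%nat with (S (S (m + k))) by lia. apply ml_mul. auto.
        -- auto. }
      * intro x. unfold A'. f_equal.
        apply functional_extensionality. intro i. destruct (Nat.eq_dec i O).
        -- subst. rewrite upd_eq. unfold fam.
           replace (Nat.ltb (S (m + k)) (S m)) with false by (symmetry; apply Nat.ltb_ge; lia).
           replace (Nat.ltb 0 (S m)) with true by (symmetry; apply Nat.ltb_lt; lia).
           unfold pw'. rewrite upd_eq. unfold mono, fmul. rewrite Hp.
           apply functional_extensionality. intro k0. rewrite Cpow_S. ring.
        -- rewrite upd_neq by auto. unfold fam, pw'. rewrite upd_neq by auto. auto.
Qed.

Lemma mono_cpoly m A c pw : cmultilinear T m A -> (forall i, good_fn (c i)) ->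
  cpoly T (fun x => A (fam m c pw x)).
Proof. intros. apply (mono_poly_gen (m + psum m pw) m 0); auto. rewrite Nat.add_0_r. auto. Qed.

End Poly.

Section Nets.
Context {D : Type} (le : D -> D -> Prop) (Hdir : directed le).

Lemma net_lim_ext (z z' : D -> Defs.C) l l' : (forall d, z d = z' d) -> l = l' -> net_lim le z' l' -> net_lim le z l.
Proof. intros E1 E2 H eps He. destruct (H eps He) as [a0 Ha]. exists a0. intros. rewrite E1, E2. auto. Qed.

Lemma net_lim_add z1 z2 l1 l2 : net_lim le z1 l1 -> net_lim le z2 l2 ->
  net_lim le (fun d => Cadd (z1 d) (z2 d)) (Cadd l1 l2).
Proof.
  intros H1 H2 eps He. destruct Hdir as [_ [_ [Htr Hub]]].
  destruct (H1 (eps/2)) as [a1 Ha1]; [lra|]. destruct (H2 (eps/2)) as [a2 Ha2]; [lra|].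
  destruct (Hub a1 a2) as [c [Hc1 Hc2]]. exists c. intros a Ha.
  specialize (Ha1 a (Htr _ _ _ Hc1 Ha)). specialize (Ha2 a (Htr _ _ _ Hc2 Ha)). toC.
  replace (z1 a + z2 a - (l1 + l2))%C with ((z1 a - l1) + (z2 a - l2))%C by ring.
  eapply Rle_lt_trans; [apply Cmod_triangle|]. lra.
Qed.

Lemma net_lim_const l : net_lim le (fun _ => l) l.
Proof.
  intros eps He. destruct Hdir as [[d _] _]. exists d. intros. toC.
  replace (l - l)%C with (RtoC 0) by ring. rewrite Cmod_0. auto.
Qed.

Lemma net_lim_Csum N z l : (forall n, net_lim le (z n) (l n)) ->
  net_lim le (fun d => Csum N (fun n => z n d)) (Csum N l).
Proof.
  intros H. induction N; simpl.
  - apply net_lim_const.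
  - apply (net_lim_add (fun d => Csum N (fun n => z n d)) (z N)); auto.
Qed.

Lemma net_lim_approx z l : (forall eps, 0 < eps -> exists z' l',
    (forall d, Cmod (Csub (z d) (z' d)) <= eps) /\ Cmod (Csub l l') <= eps /\ net_lim le z' l') ->
  net_lim le z l.
Proof.
  intros H eps He. destruct (H (eps/3)) as [z' [l' [H1 [H2 H3]]]]; [lra|].
  destruct (H3 (eps/3)) as [a0 Ha0]; [lra|]. exists a0. intros a Ha. specialize (Ha0 a Ha).
  specialize (H1 a). toC.
  replace (z a - l)%C with ((z a - z' a) + (z' a - l') - (l - l'))%C by ring.
  eapply Rle_lt_trans; [apply Cmod_sub_le|].
  pose proof (Cmod_triangle (z a - z' a) (z' a - l')). lra.
Qed.
End Nets.

Section Expand.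
Context {K : Type} (T : topology K).

Definition sfam (ns : nat -> nat) (dd : nat -> nat -> K -> Complex.C) (pw : nat -> nat -> nat)
  (x : K -> Complex.C) : nat -> K -> Complex.C :=
  fun i k => Csum (ns i) (fun t => Cmult (dd i t k) (Cpow (x k) (pw i t))).

Lemma cont_pow x p : cont T x -> cont T (fun k => Cpow (x k) p).
Proof.
  intros Hx. induction p; simpl.
  - apply cont_const.
  - apply (cont_mul T x (fun k => Cpow (x k) p)); auto.
Qed.

Lemma cont_sfam ns dd pw x : cont T x -> (forall i t, cont T (dd i t)) -> forall i, cont T (sfam ns dd pw x i).
Proof.
  intros Hx Hd i. unfold sfam. induction (ns i); simpl.
  - apply cont_const.
  - toC. apply (cont_add T (fun k => Csum n (fun t => Cmult (dd i t k) (Cpow (x k) (pw i t))))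
      (fun k => Cmult (dd i n k) (Cpow (x k) (pw i n)))); auto.
    apply cont_mul; auto. apply cont_pow; auto.
Qed.

Context {D : Type} (le : D -> D -> Prop) (g : D -> K -> Complex.C)
  (HgB : forall d, inB T (g d))
  (Hpoly : forall P, cpoly T P -> net_lim le (fun d => P (g d)) (P fzero)).

Definition Good (P : (K -> Complex.C) -> Defs.C) := net_lim le (fun d => P (g d)) (P fzero).

Lemma Good_ext P Q : (forall x, cont T x -> P x = Q x) -> Good Q -> Good P.
Proof.
  intros E H. unfold Good. apply net_lim_ext with (fun d => Q (g d)) (Q fzero); auto.
  - intro d. apply E. apply inB_cont, HgB.
  - apply E. apply cont_const.
Qed.

Lemma Good_add (Hdir : directed le) P Q : Good P -> Good Q -> Good (fun x => Cadd (P x) (Q x)).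
Proof. intros. unfold Good. apply (net_lim_add le Hdir (fun d => P (g d)) (fun d => Q (g d))); auto. Qed.

Lemma Good_base m A ns dd pw : (forall i, (i < m)%nat -> (ns i <= 1)%nat) -> cmultilinear T m A ->
  (forall i t, good_fn T (dd i t)) -> Good (fun x => A (sfam ns dd pw x)).
Proof.
  intros Hns HA Hd.
  set (c := fun i => if Nat.eqb (ns i) 0 then (fun _ : K => RtoC 0) else dd i O).
  set (pw' := fun i => pw i O).
  apply Good_ext with (fun x => A (fam m c pw' x)).
  - intros x Hx. destruct HA as [H1 _]. apply H1. intros i Hi. unfold fam.
    replace (Nat.ltb i m) with true by (symmetry; apply Nat.ltb_lt; auto).
    apply functional_extensionality. intro k. unfold sfam, mono, c, pw'.
    specialize (Hns i Hi). destruct (ns i) as [|[|]]; simpl; [| |lia]; toC; cring.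
  - apply Hpoly. apply mono_cpoly; auto. intro i. unfold c. destruct (Nat.eqb (ns i) 0); auto.
    split; [apply cont_const|]. exists 0. split; [lra|]. intro k. toC. rewrite Cmod_0. lra.
Qed.

Lemma Good_sfam (Hdir : directed le) mu : forall m A ns dd pw, (psum m ns <= mu)%nat -> cmultilinear T m A ->
  (forall i t, good_fn T (dd i t)) -> Good (fun x => A (sfam ns dd pw x)).
Proof.
  induction mu; intros m A ns dd pw Hmu HA Hd;
  (destruct (classic (exists i, (i < m)%nat /\ (2 <= ns i)%nat)) as [[i [Hi H2]] | Hno];
   [| apply (Good_base m); auto; intros i Hi; destruct (Compare_dec.le_lt_dec (ns i) 1); auto; exfalso; apply Hno; exists i; split; lia]).
  - pose proof (psum_ge m ns i Hi). lia.
  - set (n' := pred (ns i)).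
    set (ns1 := upd ns i n'). set (ns2 := upd ns i 1%nat).
    set (dd2 := fun j t => if Nat.eqb j i then dd i n' else dd j t).
    set (pw2 := fun j t => if Nat.eqb j i then pw i n' else pw j t).
    assert (Hd2 : forall j t, good_fn T (dd2 j t)) by (intros; unfold dd2; destruct (Nat.eqb j i); auto).
    apply Good_ext with (fun x => Cadd (A (sfam ns1 dd pw x)) (A (sfam ns2 dd2 pw2 x))).
    + intros x Hx. set (F1 := sfam ns1 dd pw x). set (Z := sfam ns2 dd2 pw2 x i).
      assert (E1 : sfam ns dd pw x = upd F1 i (fadd (F1 i) Z)).
      { apply functional_extensionality. intro j. destruct (Nat.eq_dec j i).
        - subst j. rewrite upd_eq. apply functional_extensionality. intro k.
          unfold F1, Z, sfam, fadd, ns1, ns2, dd2, pw2. rewrite !upd_eq, Nat.eqb_refl.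
          replace (ns i) with (S n') at 1 by (unfold n'; lia). simpl. toC. cring.
        - rewrite upd_neq by auto. unfold F1, sfam, ns1. rewrite upd_neq by auto. auto. }
      assert (E2 : sfam ns2 dd2 pw2 x = upd F1 i Z).
      { apply functional_extensionality. intro j. destruct (Nat.eq_dec j i).
        - subst j. rewrite upd_eq. auto.
        - rewrite upd_neq by auto. unfold F1, sfam, ns1, ns2, dd2, pw2. rewrite !upd_neq by auto.
          destruct (Nat.eqb_spec j i); [lia|]. auto. }
      rewrite E1, E2. destruct HA as [_ [HA2 _]].
      rewrite HA2; auto.
      * rewrite upd_id. auto.
      * apply cont_sfam; auto. intros; apply Hd.
      * apply cont_sfam; auto. intros; apply Hd.
      * unfold Z. apply cont_sfam; auto. intros; apply Hd2.
    + apply Good_add; auto.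
      * apply (IHmu m A ns1 dd pw); auto. pose proof (psum_upd m ns i n' Hi). unfold ns1. unfold n' in *. lia.
      * apply (IHmu m A ns2 dd2 pw2); auto. pose proof (psum_upd m ns i 1 Hi). unfold ns2. lia.
Qed.
End Expand.

Section Final.
Context {K : Type} (T : topology K).

Lemma Rprod_const n c : Rprod n (fun _ => c) = c ^ n.
Proof. induction n; simpl; auto. rewrite IHn. ring. Qed.

Lemma ml_diff n A : cmultilinear T n A -> exists M, 0 <= M /\ forall xs ys eta,
  (forall j, cont T (xs j) /\ cont T (ys j)) -> 0 <= eta ->
  (forall i, (i < n)%nat -> normle (xs i) 2 /\ normle (ys i) 2 /\ normle (fsub (xs i) (ys i)) eta) ->
  Cmod (Csub (A xs) (A ys)) <= M * eta.
Proof.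
  intros HA. destruct HA as [H1 [H2 [H3 [MA HM]]]].
  set (Mp := Rmax MA 0).
  exists (INR n * Mp * 2 ^ n). split.
  { apply Rmult_le_pos; [apply Rmult_le_pos; [apply pos_INR| apply Rmax_r]| apply pow_le; lra]. }
  intros xs ys eta Hc He Hb.
  set (mix := fun k j => if Nat.ltb j k then ys j else xs j).
  assert (Hmc : forall k j, cont T (mix k j)) by (intros; unfold mix; destruct (Nat.ltb j k); apply Hc).
  assert (Hk : forall k, (k <= n)%nat -> Cmod (Csub (A xs) (A (mix k))) <= INR k * Mp * 2 ^ n * eta).
  { induction k; intros Hkn.
    - replace (mix O) with xs by (apply functional_extensionality; intro j; reflexivity).
      toC. replace (A xs - A xs)%C with (RtoC 0) by ring. rewrite Cmod_0. simpl. lra.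
    - specialize (IHk ltac:(lia)).
      set (B := mix (S k)).
      assert (EB1 : mix k = upd B k (fadd (ys k) (fsub (xs k) (ys k)))).
      { apply functional_extensionality. intro j. destruct (Nat.eq_dec j k).
        - subst. rewrite upd_eq. unfold mix. rewrite Nat.ltb_irrefl.
          apply functional_extensionality. intro k0. unfold fadd, fsub. toC. cring.
        - rewrite upd_neq by auto. unfold B, mix. destruct (Nat.ltb_spec j k), (Nat.ltb_spec j (S k)); auto; lia. }
      assert (EB2 : B = upd B k (ys k)).
      { apply functional_extensionality. intro j. destruct (Nat.eq_dec j k).
        - subst. rewrite upd_eq. unfold B, mix. replace (Nat.ltb k (S k)) with true by (symmetry; apply Nat.ltb_lt; lia). auto.
        - rewrite upd_neq by auto. auto. }
      assert (Edel : A (mix k) = Cadd (A B) (A (upd B k (fsub (xs k) (ys k))))).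
      { rewrite EB1, H2; [rewrite <- EB2; auto | intro; apply Hmc | apply Hc | apply cont_fsub; apply Hc | lia]. }
      assert (Hbd : Cmod (A (upd B k (fsub (xs k) (ys k)))) <= Mp * 2 ^ n * eta).
      { specialize (HM (upd B k (fsub (xs k) (ys k))) (upd (fun _ => 2) k eta)).
        assert (ER : Rprod n (upd (fun _ => 2) k eta) = 2 ^ n * (eta / 2)).
        { replace (upd (fun _ : nat => 2) k eta) with (upd (fun _ : nat => 2) k ((fun _ : nat => 2) k * (eta / 2))).
          - rewrite Rprod_upd_mul by lia. rewrite Rprod_const. auto.
          - f_equal. field. }
        rewrite ER in HM. toC.
        eapply Rle_trans; [apply HM|].
        - intros i Hi. destruct (Nat.eq_dec i k).
          + subst. rewrite !upd_eq. split; [apply cont_fsub; apply Hc| split; auto]. apply Hb; auto.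
          + rewrite !upd_neq by auto. split; [apply Hmc| split; [lra|]]. unfold B, mix.
            destruct (Nat.ltb i (S k)); apply Hb; auto.
        - assert (0 <= 2 ^ n * (eta / 2)) by (apply Rmult_le_pos; [apply pow_le; lra| lra]).
          apply Rle_trans with (Mp * (2 ^ n * (eta / 2))).
          + apply Rmult_le_compat_r; auto. apply Rmax_l.
          + assert (0 <= Mp) by apply Rmax_r. assert (0 <= 2 ^ n) by (apply pow_le; lra). nra. }
      toC. fold B.
      replace (A xs - A B)%C with ((A xs - A (mix k)) + A (upd B k (fsub (xs k) (ys k))))%C
        by (rewrite Edel; toC; ring).
      eapply Rle_trans; [apply Cmod_triangle|]. rewrite S_INR. toC. lra. }
  specialize (Hk n (Nat.le_refl n)).
  replace (A (mix n)) with (A ys) in Hk.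
  - toC. lra.
  - apply H1. intros i Hi. unfold mix. replace (Nat.ltb i n) with true by (symmetry; apply Nat.ltb_lt; auto). auto.
Qed.
End Final.

Definition qcs (a : Complex.C) (t : nat) : Complex.C :=
  match t with O => a | S j => ((1 - Cconj a * a) * (- Cconj a) ^ j)%C end.
Definition Gs (a z : Complex.C) (N : nat) : Defs.C := Csum (S N) (fun t => Cmult (qcs a t) (Cpow z t)).

Lemma G_ident a z N : ((1 + Cconj a * z) * (Gs a z N - a) = (1 - Cconj a * a) * z * (1 - (- Cconj a * z) ^ N))%C.
Proof.
  induction N.
  - unfold Gs. simpl. toC. cring.
  - change (Gs a z (S N)) with (Cadd (Gs a z N) (Cmult (qcs a (S N)) (Cpow z (S N)))).
    toC. simpl qcs. rewrite Cpow_S, (Cpow_S (- Cconj a * z)%C), Cpow_mult_l.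
    rewrite Cpow_mult_l in IHN.
    replace ((1 + Cconj a * z) * (Gs a z N + (1 - Cconj a * a) * (- Cconj a) ^ N * (z * z ^ N) - a))%C
      with ((1 + Cconj a * z) * (Gs a z N - a) + (1 + Cconj a * z) * ((1 - Cconj a * a) * (- Cconj a) ^ N * (z * z ^ N)))%C
      by cring.
    rewrite IHN. cring.
Qed.

Lemma G_zero a N : Gs a (RtoC 0) N = a.
Proof.
  pose proof (G_ident a (RtoC 0) N).
  replace (Gs a (RtoC 0) N) with (a + (1 + Cconj a * RtoC 0) * (Gs a (RtoC 0) N - a))%C by cring.
  rewrite H. cring.
Qed.

Lemma approx_pt a z N ra : Cmod a <= ra -> ra < 1 -> Cmod z <= 1 ->
  Cmod (mpt a z - Gs a z N) <= 2 * ra ^ N / (1 - ra).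
Proof.
  intros Ha Hr Hz. pose proof (den_lb a z ra Ha Hz).
  assert (Hnz : (1 + Cconj a * z)%C <> RtoC 0) by (apply nz_of_Cmod; lra).
  pose proof (G_ident a z N) as HG.
  assert (E : (mpt a z - Gs a z N)%C = ((1 - Cconj a * a) * z * (- Cconj a * z) ^ N / (1 + Cconj a * z))%C).
  { replace (Gs a z N) with (a + ((1 + Cconj a * z) * (Gs a z N - a)) / (1 + Cconj a * z))%C at 1 by (field; auto).
    rewrite HG. unfold mpt. field. auto. }
  rewrite E, Cmod_div by auto. rewrite !Cmod_mult, Cmod_pow, Cmod_mult, Cmod_opp, Cmod_conj.
  pose proof (Cmod_s a ltac:(lra)). pose proof (Cmod_ge_0 a). pose proof (Cmod_ge_0 z).
  assert (Hp : (Cmod a * Cmod z) ^ N <= ra ^ N).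
  { apply pow_incr. split; [nra|]. nra. }
  assert (0 <= (Cmod a * Cmod z) ^ N) by (apply pow_le; nra).
  unfold Rdiv. apply Rmult_le_compat; [| apply Rlt_le, Rinv_0_lt_compat; lra | | apply Rinv_le_contravar; lra].
  - apply Rmult_le_pos; [apply Rmult_le_pos; [apply Cmod_ge_0|auto]|auto].
  - replace (2 * ra ^ N) with (2 * 1 * ra ^ N) by ring.
    apply Rmult_le_compat; auto; [apply Rmult_le_pos; [apply Cmod_ge_0|auto]|].
    apply Rmult_le_compat; auto; apply Cmod_ge_0.
Qed.

Lemma pow_le_one x j : 0 <= x <= 1 -> x ^ j <= 1.
Proof. intros. induction j; simpl; [lra|]. assert (0 <= x ^ j) by (apply pow_le; lra). nra. Qed.

Section Final2.
Context {K : Type} (T : topology K).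

Definition Qf (a : K -> Complex.C) (N : nat) (x : K -> Complex.C) : K -> Complex.C := fun k => Gs (a k) (x k) N.

Lemma good_qcs a t : inB T a -> good_fn T (fun k => qcs (a k) t).
Proof.
  intros Ha. destruct (inB_rad T a Ha) as [ra [Hra Hna]].
  assert (Hac : cont T a) by (apply inB_cont; auto).
  destruct t as [|j]; simpl.
  - split; auto. exists 1. split; [lra|]. intro k. toC. specialize (Hna k). lra.
  - split.
    + apply (cont_mul T (fun k => 1 - Cconj (a k) * a k)%C (fun k => (- Cconj (a k)) ^ j)%C).
      * unfold Cminus. apply (cont_add T (fun _ => RtoC 1) (fun k => - (Cconj (a k) * a k))%C); [apply cont_const|].
        apply (cont_opp T (fun k => Cconj (a k) * a k)%C).
        apply (cont_mul T (fun k => Cconj (a k)) a); auto. apply cont_conj; auto.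
      * apply (cont_pow T (fun k => - Cconj (a k))%C). apply (cont_opp T (fun k => Cconj (a k))). apply cont_conj; auto.
    + exists 2. split; [lra|]. intro k. toC. rewrite Cmod_mult, Cmod_pow, Cmod_opp, Cmod_conj.
      specialize (Hna k). pose proof (Cmod_s (a k) ltac:(lra)).
      assert (Cmod (a k) ^ j <= 1) by (apply pow_le_one; split; [apply Cmod_ge_0| lra]).
      assert (0 <= Cmod (a k) ^ j) by (apply pow_le; apply Cmod_ge_0).
      pose proof (Cmod_ge_0 (1 - Cconj (a k) * a k)). nra.
Qed.

Context {D : Type} (le : D -> D -> Prop) (Hdir : directed le) (g : D -> K -> Complex.C)
  (HgB : forall d, inB T (g d))
  (Hpoly : forall P, cpoly T P -> net_lim le (fun d => P (g d)) (P fzero)).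

Lemma net_form a n A : inB T a -> cmultilinear T n A ->
  net_lim le (fun d => A (fun _ => mob a (g d))) (A (fun _ => a)).
Proof.
  intros Ha HA. destruct (inB_rad T a Ha) as [ra [Hra Hna]].
  assert (Hac : cont T a) by (apply inB_cont; auto).
  destruct (ml_diff T n A HA) as [M [HM0 HMd]].
  apply net_lim_approx; auto. intros eps He.
  set (eta := Rmin 1 (eps / (M + 1))).
  assert (Heta : 0 < eta) by (unfold eta; apply Rmin_case; [lra| apply Rdiv_lt_0_compat; lra]).
  assert (Heta1 : eta <= 1) by apply Rmin_l.
  assert (HMeta : M * eta <= eps).
  { apply Rle_trans with (M * (eps / (M + 1))).
    - apply Rmult_le_compat_l; auto. apply Rmin_r.
    - apply Rmult_le_reg_r with (M + 1); [lra|].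
      replace (M * (eps / (M + 1)) * (M + 1)) with (M * eps) by (field; lra). nra. }
  destruct (pow_lt_1_zero ra ltac:(rewrite Rabs_right; lra) (eta * (1 - ra) / 2)) as [N HN].
  { apply Rdiv_lt_0_compat; [apply Rmult_lt_0_compat|]; lra. }
  specialize (HN N (Nat.le_refl N)). rewrite Rabs_right in HN by (apply Rle_ge, pow_le; lra).
  assert (Herr : 2 * ra ^ N / (1 - ra) <= eta).
  { apply Rmult_le_reg_r with (1 - ra); [lra|].
    replace (2 * ra ^ N / (1 - ra) * (1 - ra)) with (2 * ra ^ N) by (field; lra). lra. }
  exists (fun d => A (fun _ => Qf a N (g d))), (A (fun _ => a)). split; [|split].
  - intro d. eapply Rle_trans; [|apply HMeta]. toC. apply HMd.
    + intro j. split.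
      * apply (cont_mob T) with ra; [apply (inB_cont T); auto | apply (inB_cont T); auto | auto | auto | apply (inB_le1 T); auto].
      * exact (cont_sfam T (fun _ => S N) (fun _ t k => qcs (a k) t) (fun _ t => t) (g d)
           (inB_cont T _ (HgB d)) (fun i t => proj1 (good_qcs a t Ha)) O).
    + lra.
    + intros i Hi. pose proof (inB_le1 T (g d) (HgB d)) as Hg1.
      assert (Hm1 : forall k, Cmod (mob a (g d) k) <= 1) by (apply (inB_le1 T); apply inB_mob; auto).
      assert (Hdf : forall k, Cmod (mob a (g d) k - Qf a N (g d) k) <= eta).
      { intro k. rewrite mob_pt. unfold Qf. eapply Rle_trans; [apply (approx_pt _ _ _ ra); auto; lra| auto]. }
      split; [|split].
      * intro k. toC. specialize (Hm1 k). lra.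
      * intro k. toC. pose proof (Cmod_rev (mob a (g d) k) (mob a (g d) k - Qf a N (g d) k)).
        replace (mob a (g d) k - (mob a (g d) k - Qf a N (g d) k))%C with (Qf a N (g d) k) in H by ring.
        specialize (Hm1 k). specialize (Hdf k).
        pose proof (Cmod_triangle (mob a (g d) k) (- (mob a (g d) k - Qf a N (g d) k))%C).
        replace (mob a (g d) k + - (mob a (g d) k - Qf a N (g d) k))%C with (Qf a N (g d) k) in H0 by ring.
        rewrite Cmod_opp in H0. lra.
      * intro k. unfold fsub. toC. apply Hdf.
  - toC. replace (A (fun _ => a) - A (fun _ => a))%C with (RtoC 0) by ring. rewrite Cmod_0. lra.
  - pose proof (Good_sfam T le g HgB Hpoly Hdir (psum n (fun _ => S N)) n A (fun _ => S N)
       (fun _ t k => qcs (a k) t) (fun _ t => t) (Nat.le_refl _) HA ltac:(intros; apply good_qcs; auto)) as HG.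
    unfold Good in HG.
    apply (net_lim_ext le _ (fun d => A (sfam (fun _ => S N) (fun _ t k => qcs (a k) t) (fun _ t => t) (g d))) _
       (A (sfam (fun _ => S N) (fun _ t k => qcs (a k) t) (fun _ t => t) fzero))); [intro d; reflexivity| | exact HG].
    f_equal. apply functional_extensionality. intro i. apply functional_extensionality. intro k.
    unfold sfam. change (a k = Gs (a k) (fzero k) N). unfold fzero. toC. symmetry. apply G_zero.
Qed.

Lemma poly_mob a P : inB T a -> cpoly T P -> net_lim le (fun d => P (mob a (g d))) (P a).
Proof.
  intros Ha [N [A [HA HP]]].
  apply net_lim_ext with (fun d => Csum N (fun n => A n (fun _ => mob a (g d)))) (Csum N (fun n => A n (fun _ => a))).
  - intro d. apply HP. apply inB_cont, inB_mob; auto.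
  - apply HP. apply inB_cont; auto.
  - apply (net_lim_Csum le Hdir N (fun n d => A n (fun _ => mob a (g d)))). intro n. apply (net_form a n); auto.
Qed.
End Final2.

Theorem corollary3p4 (K : Type) (T : topology K)
    (HK : top_compact T) (HH : top_hausdorff T) :
  (forall psi, Hinf T psi ->
     forall tau, Mfib T fzero tau -> Cl T psi fzero (tau psi)) <->
  (forall f0, inB T f0 -> forall psi, Hinf T psi ->
     forall tau, Mfib T f0 tau -> Cl T psi f0 (tau psi)).
Proof.
  split.
  - intros Hi f0 Hf0 psi Hpsi tau Htau.
    assert (Hp' : Hinf T (fun x => psi (mob f0 x))) by (apply Hinf_mob; auto).
    assert (Ht' := Mfib_mob T f0 tau Hf0 Htau).
    destruct (Hi _ Hp' _ Ht') as [D [le [g [Hdir [HgB [Hpol Hlim]]]]]].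
    assert (Ev : tau (fun x => psi (mob f0 (mob (fneg f0) x))) = tau psi).
    { destruct Htau as [H1 _]. symmetry. apply H1; auto. intros x Hx. rewrite (mob_inv_fun T); auto. }
    exists D, le, (fun d => mob f0 (g d)). split; [auto|]. split; [|split].
    + intro d. apply inB_mob; auto.
    + intros P HP. apply (poly_mob T le Hdir g HgB Hpol f0 P Hf0 HP).
    + simpl in Hlim. rewrite Ev in Hlim. auto.
  - intros Hii psi Hpsi tau Htau. apply Hii; auto. apply inB_zero.
Qed.
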